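(* Let $P$ be a finite graded connected poset with rank function $\rho$, let $G$ be a group of automorphisms of $P$, and let $\theta$ be the equivalence relation whose classes are the $G$-orbits. Then (1) $\rho(p)=\rho(q)$ whenever $p\,\theta\,q$; and (2) the quotient $P/G:=(P/\theta,\leqslant_\theta)$ is a graded poset (with rank function $[p]\mapsto\rho(p)$).
   Context: A poset is graded if there is an integer-valued rank function $\rho$ with $p<q\Rightarrow\rho(p)<\rho(q)$ and $p\lessdot q\Rightarrow\rho(q)=\rho(p)+1$, where $p\lessdot q$ means $p<q$ with nothing strictly between. A poset is connected if its Hasse diagram (the graph with vertices $P$ and an edge for each covering relation) is connected. For an equivalence relation $\theta$ with classes $[p]$, $[p]\leqslant_\theta[q]$ iff there exist $p'\in[p]$, $q'\in[q]$ with $p'\leqslant q'$. *)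

(* Defs.v *)
From mathcomp Require Import all_boot all_order all_fingroup all_algebra.
Set Implicit Arguments. Unset Strict Implicit. Unset Printing Implicit Defensive.
Import Order.Theory GRing.Theory.

Section RelPoset.
Variable U : finType.
Variable D : {set U}.
Variable r : rel U.

Definition poset_on : Prop :=
  [/\ {in D, forall x, r x x},
      {in D &, forall x y, r x y -> r y x -> x = y} &
      {in D & &, forall x y z, r x y -> r y z -> r x z}].

Definition covers_on (x y : U) : bool :=
  [&& x \in D, y \in D, r x y, x != y &
      [forall z in D, ~~ [&& r x z, r z y, z != x & z != y]]].

Definition rank_fun_on (rho : U -> int) : Prop :=
  (forall x y, x \in D -> y \in D -> r x y -> x != y -> (rho x < rho y)%R) /\
  (forall x y, covers_on x y -> rho y = (rho x + 1)%R).

Definition graded_on : Prop := exists rho, rank_fun_on rho.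
End RelPoset.

Definition Prel {d} {T : finPOrderType d} : rel T := fun x y => (x <= y)%O.

Definition covers {d} {T : finPOrderType d} (x y : T) : bool :=
  covers_on [set: T] Prel x y.

Definition rank_fun {d} {T : finPOrderType d} (rho : T -> int) : Prop :=
  rank_fun_on [set: T] Prel rho.

Definition hasse_connected {d} {T : finPOrderType d} : Prop :=
  forall x y : T, connect (fun a b => covers a b || covers b a) x y.

Definition automorphism_group {d} {T : finPOrderType d} (G : {group {perm T}}) : Prop :=
  forall g, g \in G -> forall x y : T, (g x <= g y)%O = (x <= y)%O.

Definition theta_classes {d} {T : finPOrderType d} (G : {group {perm T}}) : {set {set T}} :=
  [set orbit 'P G x | x : T].

Definition le_theta {d} {T : finPOrderType d} : rel {set T} :=
  fun A B => [exists p in A, exists q in B, (p <= q)%O].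

Definition class_rank {T : finType} (rho : T -> int) (A : {set T}) : int :=
  if [pick x in A] is Some x then rho x else 0%R.

(* Main.v *)
Require Import Defs.
From mathcomp Require Import all_boot all_order all_fingroup all_algebra.
From mathcomp Require Import zify.
Import Order.Theory GRing.Theory Num.Theory.
Set Implicit Arguments. Unset Strict Implicit.

Section Aux.
Variables (d : Order.disp_t) (T : finPOrderType d) (rho : T -> int)
  (G : {group {perm T}}).
Hypotheses (Hr : rank_fun rho) (Hc : hasse_connected (T := T))
  (Ha : automorphism_group G).

Lemma coversE (x y : T) : covers x y =
  [&& (x <= y)%O, x != y & [forall z, ~~ [&& (x <= z)%O, (z <= y)%O, z != x & z != y]]].
Proof.
rewrite /covers /covers_on !in_setT /=; congr [&& _, _ & _].
by apply/eq_forallb => z; rewrite in_setT.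
Qed.

Lemma rho_lt (x y : T) : (x < y)%O -> (rho x < rho y)%R.
Proof.
rewrite lt_def => /andP[ne le]; by apply: Hr.1; rewrite ?in_setT // eq_sym.
Qed.

Lemma rho_cov (x y : T) : covers x y -> rho y = (rho x + 1)%R.
Proof. exact: Hr.2. Qed.

Lemma auto_cov g (x y : T) : g \in G -> covers x y -> covers (g x) (g y).
Proof.
move=> gG; rewrite !coversE (Ha gG) (inj_eq perm_inj) => /and3P[-> -> /forallP H].
apply/forallP => z; rewrite -(permKV g z); move: (g^-1 z)%g => w.
by rewrite !(Ha gG) !(inj_eq perm_inj); apply: H.
Qed.

Lemma rho_orbit_const g : g \in G -> forall x, rho (g x) = rho x.
Proof.
move=> gG.
have step : forall a b, covers a b || covers b a ->
    (rho (g b) - rho b = rho (g a) - rho a)%R.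
  move=> a b /orP[] H; have H1 := rho_cov H; have H2 := rho_cov (auto_cov gG H); lia.
have cst : forall x y, (rho (g y) - rho y = rho (g x) - rho x)%R.
  move=> x y; have /connectP[p Hp ->] := Hc x y.
  elim: p x Hp => [|a p IH] x //= /andP[e Hp].
  by rewrite (IH a Hp) (step _ _ e).
set c := fun x => (rho (g x) - rho x)%R.
move=> x.
have Hs : (\sum_(y : T) rho (g y) = \sum_(y : T) rho y)%R.
  by rewrite [RHS](reindex_inj (@perm_inj _ g)).
have : (\sum_(y : T) rho (g y) = \sum_(y : T) (rho y + c x))%R.
  by apply: eq_bigr => y _; have := cst x y; rewrite /c; lia.
rewrite big_split /= sumr_const Hs => /eqP; rewrite -{1}[X in X == _]addr0 eq_sym (inj_eq (addrI _)).
rewrite mulrn_eq0 => /orP[|/eqP]; last by rewrite /c; lia.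
move=> /eqP H0; have : 0 < #|T| by apply/card_gt0P; exists x.
by rewrite H0.
Qed.

Lemma rho_orb (p q : T) : q \in orbit 'P G p -> rho p = rho q.
Proof. by case/orbitP=> g gG <- /=; rewrite apermE rho_orbit_const. Qed.

Lemma class_rankE A x : A \in theta_classes G -> x \in A -> class_rank rho A = rho x.
Proof.
case/imsetP=> y _ -> xA; rewrite /class_rank; case: pickP => [z zA|/(_ x)]; last by rewrite xA.
by rewrite -(rho_orb xA) -(rho_orb zA).
Qed.

Lemma class_eq A x : A \in theta_classes G -> x \in A -> A = orbit 'P G x.
Proof. by case/imsetP=> y _ -> xA; apply/esym/orbit_eqP. Qed.

Lemma exists_cover (z q : T) : (z < q)%O -> exists2 z', (z <= z')%O & covers z' q.
Proof.
move: {2}`|rho q - rho z|%N (leqnn `|rho q - rho z|%N) => n.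
elim: n z => [|n IH] z Hn zq.
  have := rho_lt zq; lia.
case Hcov: (covers z q); first by exists z.
move: Hcov; rewrite coversE (ltW zq) (lt_eqF zq) /= => /negbT; rewrite negb_forall => /existsP[w].
rewrite negbK => /and4P[zw wq wz wq'].
have zw' : (z < w)%O by rewrite lt_def wz zw.
have wq2 : (w < q)%O by rewrite lt_def eq_sym wq' wq.
have := rho_lt zw'; have := rho_lt wq2 => h1 h2.
have [|z' wz' cz'] := IH w _ wq2; first lia.
by exists z' => //; apply: le_trans wz'; apply: ltW.
Qed.

End Aux.

Theorem mainTheorem11 (d : Order.disp_t) (T : finPOrderType d)
    (rho : T -> int) (G : {group {perm T}}) :
  rank_fun rho -> hasse_connected (T := T) -> automorphism_group G ->
  (forall p q : T, q \in orbit 'P G p -> rho p = rho q) /\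
  (poset_on (theta_classes G) le_theta /\
   rank_fun_on (theta_classes G) le_theta (class_rank rho)).
Proof.
move=> Hr Hc Ha.
have orb := rho_orb Hr Hc Ha.
have crE := class_rankE Hr Hc Ha.
have ltr := rho_lt Hr.
have eqle : forall p q : T, (p <= q)%O -> rho p = rho q -> p = q.
  move=> p q pq e; apply/eqP; apply/negPn/negP => ne.
  have : (p < q)%O by rewrite lt_def eq_sym ne.
  by move/ltr; rewrite e ltxx.
split=> //; split; last split.
- split.
  + move=> A /imsetP[x _ ->]; apply/existsP; exists x; rewrite orbit_refl.
    by apply/existsP; exists x; rewrite orbit_refl lexx.
  + move=> A B HA HB /existsP[p /andP[pA /existsP[q /andP[qB pq]]]].
    move=> /existsP[p' /andP[p'B /existsP[q' /andP[q'A pq']]]].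
    have r1 := crE _ _ HA pA; have r2 := crE _ _ HA q'A.
    have r3 := crE _ _ HB qB; have r4 := crE _ _ HB p'B.
    have := Hr.1 p q; have := Hr.1 p' q'; rewrite !in_setT.
    case: (eqVneq p q) => [epq|npq] H1 H2.
      by rewrite (class_eq HA pA) (class_eq HB qB) epq.
    have := H2 isT isT pq isT.
    case: (eqVneq p' q') => [e'|n'] .
      by rewrite (class_eq HA q'A) (class_eq HB p'B) e'.
    have := H1 isT isT pq' n'; lia.
  + move=> A B C HA HB HC /existsP[p /andP[pA /existsP[q /andP[qB pq]]]].
    move=> /existsP[q' /andP[q'B /existsP[r /andP[rC qr]]]].
    have : q' \in orbit 'P G q by rewrite -(class_eq HB qB).
    case/orbitP=> g gG /=; rewrite apermE => eq'.
    apply/existsP; exists (g p); apply/andP; split.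
      rewrite (class_eq HA pA); apply/orbitP; exists g => //; by rewrite /= apermE.
    apply/existsP; exists r; rewrite rC /=; apply: le_trans qr.
    by rewrite -eq' (Ha g gG p q).
- move=> A B HA HB /existsP[p /andP[pA /existsP[q /andP[qB pq]]]] nAB.
  rewrite (crE _ _ HA pA) (crE _ _ HB qB); apply: Hr.1; rewrite ?in_setT //.
  by apply: contraNneq nAB => epq; rewrite (class_eq HA pA) (class_eq HB qB) epq.
- move=> A B /and5P[HA HB /existsP[p /andP[pA /existsP[q /andP[qB pq]]]] nAB /forallP Hf].
  have npq : p != q.
    by apply: contraNneq nAB => epq; rewrite (class_eq HA pA) (class_eq HB qB) epq.
  have plq : (p < q)%O by rewrite lt_def eq_sym npq.
  have [z pz cz] := exists_cover Hr plq.
  set C := orbit 'P G z.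
  have HC : C \in theta_classes G by apply/imsetP; exists z.
  have zC : z \in C by rewrite orbit_refl.
  have := Hf C; rewrite HC /=.
  have -> : le_theta A C by apply/existsP; exists p; rewrite pA; apply/existsP; exists z; rewrite zC.
  have zq : (z <= q)%O by move: cz; rewrite coversE => /andP[].
  have -> : le_theta C B by apply/existsP; exists z; rewrite zC; apply/existsP; exists q; rewrite qB.
  rewrite /= negb_and !negbK => /orP[/eqP CA|/eqP CB].
    rewrite (crE _ _ HA pA) (crE _ _ HB qB) (rho_cov Hr cz).
    by rewrite (orb p z) // -(class_eq HA pA) -CA.
  exfalso.
  have zlq : (z < q)%O by move: cz; rewrite coversE lt_def eq_sym => /and3P[-> /= -> _].
  have := ltr _ _ zlq; rewrite (orb z q); first by rewrite ltxx.
  by rewrite -/C CB.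
Qed.
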